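(* Let $\Omega\subseteq\mathbb{R}^n$ be open and connected and let $u\in C^2(\Omega;\mathbb{R}^n)$. For $a\ge0$ set $\mathcal{L}_a:=\{A\in\mathbb{R}^{n\times n}: |A|=\sqrt a,\ \det A\neq0\}$. Consider: (a) there exists $a\ge0$ such that $Du(x)\in\mathcal{L}_a$ for all $x\in\Omega$; (b) $\Delta_\infty u=0$ on $\Omega$. Then (a) implies (b). Conversely, if $u$ is in addition a local diffeomorphism on $\Omega$, then (b) implies (a).
   Context: $|A|^2=\sum_{\alpha,i}A_{\alpha i}^2$. For $u\in C^2(\Omega;\mathbb{R}^n)$, $(\Delta_\infty u)_\alpha:=\sum_{i,j,\beta} D_iu_\alpha\, D_ju_\beta\, D^2_{ij}u_\beta+|Du|^2\sum_{\beta,i}[Du]^\perp_{\alpha\beta}\,D^2_{ii}u_\beta$, where $[Du(x)]^\perp$ is the orthogonal projection of $\mathbb{R}^n$ onto the null space of $Du(x)^\top$. *)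

(* Defs.v *)
From Stdlib Require Import Reals ClassicalEpsilon.
From Stdlib Require Fin List.
Import List.ListNotations.
Open Scope R_scope.

Definition Vec (n : nat) := Fin.t n -> R.
Definition Mat (n : nat) := Fin.t n -> Fin.t n -> R.

Fixpoint fsum (n : nat) : (Fin.t n -> R) -> R :=
  match n return (Fin.t n -> R) -> R with
  | O => fun _ => 0
  | S m => fun f => f Fin.F1 + fsum m (fun i => f (Fin.FS i))
  end.

Definition dist {n} (x y : Vec n) : R := sqrt (fsum n (fun k => (x k - y k) ^ 2)).

Definition is_open {n} (O : Vec n -> Prop) : Prop :=
  forall x, O x -> exists r, r > 0 /\ forall y, dist x y < r -> O y.

Definition is_connected {n} (O : Vec n -> Prop) : Prop :=
  forall U V : Vec n -> Prop, is_open U -> is_open V ->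
    (forall x, O x -> U x \/ V x) ->
    (exists x, O x /\ U x) -> (exists x, O x /\ V x) ->
    exists x, O x /\ U x /\ V x.

Definition cont_at {n} (f : Vec n -> R) (x : Vec n) : Prop :=
  forall eps, eps > 0 -> exists d, d > 0 /\
    forall y, dist x y < d -> Rabs (f y - f x) < eps.

Definition shift {n} (x : Vec n) (i : Fin.t n) (t : R) : Vec n :=
  fun k => if Fin.eq_dec k i then x k + t else x k.

Definition has_pd {n} (f : Vec n -> R) (i : Fin.t n) (x : Vec n) : Prop :=
  exists l, derivable_pt_lim (fun t => f (shift x i t)) 0 l.

(* the partial derivative D_i f (x) (meaningful when it exists; limits are unique) *)
Definition Dp {n} (f : Vec n -> R) (i : Fin.t n) (x : Vec n) : R :=
  epsilon (inhabits 0) (fun l => derivable_pt_lim (fun t => f (shift x i t)) 0 l).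

Definition C1_scal_on {n} (O : Vec n -> Prop) (f : Vec n -> R) : Prop :=
  forall x, O x -> cont_at f x /\
    forall i, has_pd f i x /\ cont_at (Dp f i) x.

Definition C2_scal_on {n} (O : Vec n -> Prop) (f : Vec n -> R) : Prop :=
  forall x, O x -> cont_at f x /\
    forall i, has_pd f i x /\ cont_at (Dp f i) x /\
      forall j, has_pd (Dp f i) j x /\ cont_at (Dp (Dp f i) j) x.

Definition C1_on {n} (O : Vec n -> Prop) (u : Vec n -> Vec n) : Prop :=
  forall a, C1_scal_on O (fun y => u y a).
Definition C2_on {n} (O : Vec n -> Prop) (u : Vec n -> Vec n) : Prop :=
  forall a, C2_scal_on O (fun y => u y a).

(* Du(x)_{alpha i} = D_i u_alpha (x) *)
Definition Du {n} (u : Vec n -> Vec n) (x : Vec n) : Mat n :=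
  fun a i => Dp (fun y => u y a) i x.
(* D^2_{ij} u_beta (x) = D_i D_j u_beta (x) *)
Definition D2u {n} (u : Vec n -> Vec n) (x : Vec n) (b i j : Fin.t n) : R :=
  Dp (Dp (fun y => u y b) j) i x.

Definition frob2 {n} (A : Mat n) : R := fsum n (fun a => fsum n (fun i => A a i ^ 2)).

(* determinant: Laplace expansion along the first row, on nat-indexed matrices *)
Fixpoint detN (m : nat) (A : nat -> nat -> R) : R :=
  match m with
  | O => 1
  | S k => List.fold_right Rplus 0
      (List.map (fun j => (-1) ^ j * A 0%nat j *
              detN k (fun r c => A (S r) (if Nat.ltb c j then c else S c)))
           (List.seq 0 (S k)))
  end.

Definition toN {n} (A : Mat n) : nat -> nat -> R :=
  fun r c => match Fin.of_nat r n, Fin.of_nat c n with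
             | inleft i, inleft j => A i j
             | _, _ => 0
             end.

Definition det {n} (A : Mat n) : R := detN n (toN A).

Definition in_La {n} (a : R) (A : Mat n) : Prop := sqrt (frob2 A) = sqrt a /\ det A <> 0.

(* P is (the matrix of) the orthogonal projection of R^n onto ker(M^T) *)
Definition is_proj_ker {n} (M P : Mat n) : Prop :=
  forall v : Vec n,
    let w := fun a => fsum n (fun b => P a b * v b) in
    (forall i, fsum n (fun a => M a i * w a) = 0) /\
    (forall z : Vec n, (forall i, fsum n (fun a => M a i * z a) = 0) ->
        fsum n (fun a => (v a - w a) * z a) = 0).

Definition proj_ker {n} (M : Mat n) : Mat n :=
  epsilon (inhabits (fun _ _ => 0)) (is_proj_ker M).

Definition inf_lap {n} (u : Vec n -> Vec n) (x : Vec n) (a : Fin.t n) : R :=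
  let A := Du u x in
  let P := proj_ker A in
  fsum n (fun i => fsum n (fun j => fsum n (fun b =>
      A a i * A b j * D2u u x b i j)))
  + frob2 A * fsum n (fun b => fsum n (fun i => P a b * D2u u x b i i)).

Definition local_diffeo_on {n} (O : Vec n -> Prop) (u : Vec n -> Vec n) : Prop :=
  forall x, O x -> exists (U V : Vec n -> Prop) (v : Vec n -> Vec n),
    is_open U /\ U x /\ (forall y, U y -> O y) /\ is_open V /\
    (forall y, U y -> V (u y) /\ forall k, v (u y) k = y k) /\
    (forall w, V w -> U (v w) /\ forall k, u (v w) k = w k) /\
    C1_on V v.

(* Main.v *)
Require Import Defs.
From Stdlib Require Import Reals Lra Lia.
From Stdlib Require Import FunctionalExtensionality ClassicalEpsilon.
From Stdlib Require Fin.
Open Scope R_scope.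

Module LA.
From mathcomp Require Import all_boot all_algebra Rstruct.
Import GRing.Theory.

Definition tn {n} (b : Fin.t n) : nat := proj1_sig (Fin.to_nat b).
Definition fin {n} (i : 'I_n) : Fin.t n := Fin.of_nat_lt (elimT ltP (ltn_ord i)).

Lemma tn_fin n (i : 'I_n) : tn (fin i) = i.
Proof. by rewrite /tn /fin Fin.to_nat_of_nat. Qed.

Lemma tn_FS n (x : Fin.t n) : tn (Fin.FS x) = S (tn x).
Proof. rewrite /tn /=. by case: (Fin.to_nat x). Qed.

Lemma fin_surj n (b : Fin.t n) : exists i : 'I_n, fin i = b.
Proof.
  exists (Ordinal (introT ltP (proj2_sig (Fin.to_nat b)))).
  apply: Fin.to_nat_inj. rewrite -/(tn _) -/(tn _) tn_fin //.
Qed.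

Local Open Scope ring_scope.

Lemma fsum_big n (F : Fin.t n -> R) : fsum n F = \sum_(i < n) F (fin i).
Proof.
  elim: n F => [|m IH] F; first by rewrite big_ord0.
  rewrite big_ord_recl /= RplusE IH.
  have -> : fin (@ord0 m) = Fin.F1 by apply: Fin.to_nat_inj; rewrite -/(tn _) tn_fin.
  congr (_ + _). apply: eq_bigr => i _. congr F.
  apply: Fin.to_nat_inj. rewrite -/(tn _) -/(tn _) tn_FS !tn_fin lift0 //.
Qed.

Definition Mx m (f : nat -> nat -> R) : 'M[R]_m := \matrix_(i, j) f i j.

Lemma foldmap (G : nat -> R) s :
  List.fold_right Rplus 0%R (List.map G s) = \sum_(j <- s) G j.
Proof. elim: s => [|x s IH]; first by rewrite big_nil. by rewrite big_cons /= IH. Qed.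

Lemma seq_iota a m : List.seq a m = iota a m.
Proof. by elim: m a => [|m IH] a //=; rewrite IH. Qed.

Lemma ltb_ltn c j : Nat.ltb c j = (c < j)%N.
Proof.
  case: (boolP (c < j)%N) => h.
  - by apply/Nat.ltb_lt/ltP.
  - apply/Nat.ltb_ge. move: h; rewrite -leqNgt => /leP //.
Qed.

Lemma m1pow j : pow (IZR (Zneg 1)) j = (-1) ^+ j :> R.
Proof. rewrite RpowE. done. Qed.

Lemma detN_det m f : detN m f = \det (Mx m f).
Proof.
  elim: m f => [|k IH] f; first by rewrite det_mx00.
  rewrite [detN k.+1 f]/detN -/detN (expand_det_row _ ord0).
  rewrite (List.map_ext _ (fun j => (-1) ^+ j * f 0%N j *
     \det (Mx k (fun r c => f r.+1 (if Nat.ltb c j then c else c.+1))))); last first.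
    by move=> j; rewrite IH m1pow.
  rewrite foldmap seq_iota.
  have -> : iota 0 k.+1 = index_iota 0 k.+1 by rewrite /index_iota subn0.
  rewrite big_mkord.
  apply: eq_bigr => j _. rewrite /cofactor mxE add0n mulrCA mulrA.
  congr (_ * \det _). apply/matrixP => r c. rewrite !mxE ltb_ltn lift0 /= /bump.
  case: (ltnP c j) => h.
  - by rewrite add0n.
  - by rewrite add1n.
Qed.

Lemma of_nat_inleft p n (h : (p < n)%coq_nat) : Fin.of_nat p n = inleft (Fin.of_nat_lt h).
Proof.
  elim: p n h => [|p IH] [|n] h; try by (exfalso; apply: (Nat.nlt_0_r _ h)).
  - done.
  - rewrite /= (IH n (proj2 (Nat.succ_lt_mono p n) h)). done.
Qed.

Definition MA {n} (A : Mat n) : 'M[R]_n := \matrix_(i, j) A (fin i) (fin j).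

Lemma det_MA n (A : Mat n) : det A = \det (MA A).
Proof.
  rewrite /det detN_det. congr (\det _). apply/matrixP => i j. rewrite !mxE /toN.
  rewrite (of_nat_inleft _ _ (elimT ltP (ltn_ord i))) (of_nat_inleft _ _ (elimT ltP (ltn_ord j))).
  done.
Qed.

Lemma det_ker n (A : Mat n) : det A <> 0 ->
  forall z : Vec n, (forall i, fsum n (fun a => A a i * z a) = 0) -> forall b, z b = 0.
Proof.
  move=> hd z hz b.
  have hu : MA A \in unitmx by rewrite unitmxE unitfE -det_MA; apply/eqP.
  pose zr : 'rV[R]_n := \row_j z (fin j).
  have h0 : zr *m MA A = 0.
    apply/matrixP => i0 i. rewrite !mxE.
    rewrite (eq_bigr (fun a => A (fin a) (fin i) * z (fin a))); last first.
      by move=> a _; rewrite !mxE mulrC.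
    by rewrite -(fsum_big _ (fun a => A a (fin i) * z a)) hz.
  have : zr = 0 by rewrite -(mulmxK hu zr) h0 mul0mx.
  case: (fin_surj _ b) => a <- /matrixP /(_ ord0 a). by rewrite !mxE.
Qed.

Lemma det_inv n (A B : Mat n) :
  (forall a b, fsum n (fun k => A a k * B k b) =
     match Fin.eq_dec a b with left _ => IZR 1 | right _ => IZR 0 end) ->
  det A <> 0.
Proof.
  move=> h.
  have hm : MA A *m MA B = 1%:M.
    apply/matrixP => i j. rewrite !mxE.
    rewrite (eq_bigr (fun k => A (fin i) (fin k) * B (fin k) (fin j))); last first.
      by move=> a _; rewrite !mxE.
    rewrite -(fsum_big _ (fun k => A (fin i) k * B k (fin j))) h.
    case: (Fin.eq_dec (fin i) (fin j)) => e.
    - have -> : (i == j) = true.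
        by apply/eqP/val_inj; rewrite /= -(tn_fin _ i) e tn_fin.
      done.
    - have -> : (i == j) = false by apply/eqP => e'; apply: e; rewrite e'.
      done.
  move=> h0. have := congr1 determinant hm.
  rewrite det_mulmx det1 -det_MA h0 mul0r => /eqP. by rewrite eq_sym oner_eq0.
Qed.
End LA.

Notation tn := LA.tn.
Notation tn_FS := LA.tn_FS.

Lemma fsum_ext n (f g : Fin.t n -> R) : (forall i, f i = g i) -> fsum n f = fsum n g.
Proof.
  induction n; intros H; simpl; [reflexivity|].
  rewrite H. f_equal. apply IHn. intros; apply H.
Qed.

Lemma fsum_plus n (f g : Fin.t n -> R) : fsum n (fun i => f i + g i) = fsum n f + fsum n g.
Proof.
  induction n; simpl; [ring|]. rewrite (IHn (fun i => f (Fin.FS i)) (fun i => g (Fin.FS i))). ring.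
Qed.

Lemma fsum_minus n (f g : Fin.t n -> R) : fsum n (fun i => f i - g i) = fsum n f - fsum n g.
Proof.
  induction n; simpl; [ring|]. rewrite (IHn (fun i => f (Fin.FS i)) (fun i => g (Fin.FS i))). ring.
Qed.

Lemma fsum_scal n c (f : Fin.t n -> R) : fsum n (fun i => c * f i) = c * fsum n f.
Proof.
  induction n; simpl; [ring|]. rewrite (IHn (fun i => f (Fin.FS i))). ring.
Qed.

Lemma fsum_zero n (f : Fin.t n -> R) : (forall i, f i = 0) -> fsum n f = 0.
Proof.
  induction n; intros H; simpl; [reflexivity|]. rewrite H, IHn; [ring|]. intros; apply H.
Qed.

Lemma fsum_swap n m (F : Fin.t n -> Fin.t m -> R) :
  fsum n (fun i => fsum m (fun j => F i j)) = fsum m (fun j => fsum n (fun i => F i j)).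
Proof.
  induction n; simpl.
  - symmetry. apply fsum_zero. reflexivity.
  - rewrite IHn. rewrite <- fsum_plus. reflexivity.
Qed.

Lemma fsum_le n (f g : Fin.t n -> R) : (forall i, f i <= g i) -> fsum n f <= fsum n g.
Proof.
  induction n; intros H; simpl; [lra|]. pose proof (H Fin.F1).
  pose proof (IHn (fun i => f (Fin.FS i)) (fun i => g (Fin.FS i)) (fun i => H _)). lra.
Qed.

Lemma fsum_nonneg n (f : Fin.t n -> R) : (forall i, 0 <= f i) -> 0 <= fsum n f.
Proof. intros H. pose proof (fsum_le n (fun _ => 0) f H). rewrite fsum_zero in H0; auto. Qed.

Lemma fsum_abs n (f : Fin.t n -> R) : Rabs (fsum n f) <= fsum n (fun i => Rabs (f i)).
Proof.
  induction n; simpl.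
  - rewrite Rabs_R0. lra.
  - eapply Rle_trans; [apply Rabs_triang|]. pose proof (IHn (fun i => f (Fin.FS i))). lra.
Qed.

Lemma fsum_const_le n (f : Fin.t n -> R) c : (forall i, f i <= c) -> fsum n f <= INR n * c.
Proof.
  induction n; intros H; cbn [fsum]; [simpl; lra|].
  pose proof (IHn (fun i => f (Fin.FS i)) (fun i => H _)). pose proof (H Fin.F1).
  rewrite S_INR. lra.
Qed.

Lemma fsum_single n (f : Fin.t n -> R) b : (forall a, a <> b -> f a = 0) -> fsum n f = f b.
Proof.
  induction n; intros H.
  - apply (Fin.case0 (fun b => fsum 0 f = f b) b).
  - revert H. apply (Fin.caseS' b); clear b; [intros H|intros p H]; simpl.
    + rewrite fsum_zero; [ring|]. intros i. apply H. intro e. inversion e.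
    + rewrite H by (intro e; inversion e). rewrite (IHn _ p); [ring|].
      intros a ha. apply H. intro e. apply ha. apply Fin.FS_inj. exact e.
Qed.

Lemma fsum_tele n (h : nat -> R) : fsum n (fun i => h (S (tn i)) - h (tn i)) = h n - h O.
Proof.
  revert h; induction n; intros h; simpl; [ring|].
  rewrite (fsum_ext _ _ (fun i => (fun k => h (S k)) (S (tn i)) - (fun k => h (S k)) (tn i))).
  - rewrite (IHn (fun k => h (S k))). unfold LA.tn at 1 2. simpl. ring.
  - intros i. rewrite tn_FS. reflexivity.
Qed.

Lemma dist_mono n (p q y : Vec n) :
  (forall k, Rabs (y k - p k) <= Rabs (q k - p k)) -> Defs.dist p y <= Defs.dist p q.
Proof.
  intros H. unfold Defs.dist. apply sqrt_le_1_alt. apply fsum_le. intros k.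
  specialize (H k).
  assert (E1 : (p k - y k) ^ 2 = Rabs (y k - p k) ^ 2).
  { rewrite pow2_abs. ring. }
  assert (E2 : (p k - q k) ^ 2 = Rabs (q k - p k) ^ 2).
  { rewrite pow2_abs. ring. }
  rewrite E1, E2. pose proof (Rabs_pos (y k - p k)). nra.
Qed.

Lemma dist_shift n (x : Vec n) i t : Defs.dist x (shift x i t) = Rabs t.
Proof.
  unfold Defs.dist. rewrite (fsum_single _ _ i).
  - unfold shift. destruct (Fin.eq_dec i i) as [_|c]; [|congruence].
    replace ((x i - (x i + t)) ^ 2) with (t * t) by ring. apply sqrt_Rsqr_abs.
  - intros a ha. unfold shift. destruct (Fin.eq_dec a i); [congruence|]. ring.
Qed.

Lemma dist_nonneg n (x y : Vec n) : 0 <= Defs.dist x y.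
Proof. apply sqrt_pos. Qed.

Lemma dist_small n (p y : Vec n) r : 0 < r ->
  (forall k, Rabs (y k - p k) < r / (INR n + 1)) -> Defs.dist p y < r.
Proof.
  intros hr H. unfold Defs.dist.
  assert (hn : 0 <= INR n) by apply pos_INR.
  set (e := r / (INR n + 1)).
  assert (he : e * (INR n + 1) = r) by (unfold e; field; lra).
  assert (he0 : 0 < e) by (unfold e; apply Rdiv_lt_0_compat; lra).
  assert (Hs : fsum n (fun k => (p k - y k) ^ 2) <= INR n * (e * e)).
  { apply fsum_const_le. intros k. specialize (H k). fold e in H.
    replace ((p k - y k) ^ 2) with (Rabs (y k - p k) * Rabs (y k - p k)).
    - pose proof (Rabs_pos (y k - p k)). nra.
    - rewrite <- Rabs_mult. rewrite Rabs_right. ring.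
      replace ((y k - p k) * (y k - p k)) with ((y k - p k)^2) by ring.
      apply Rle_ge, pow2_ge_0. }
  rewrite <- (sqrt_Rsqr r) by lra. apply sqrt_lt_1_alt. split.
  - apply fsum_nonneg. intros; apply pow2_ge_0.
  - unfold Rsqr. rewrite <- he. nra.
Qed.

Lemma shift_shift n (z : Vec n) i s t : shift (shift z i s) i t = shift z i (s + t).
Proof.
  apply functional_extensionality; intros k. unfold shift.
  destruct (Fin.eq_dec k i); ring.
Qed.

Lemma shift0 n (z : Vec n) i : shift z i 0 = z.
Proof.
  apply functional_extensionality; intros k. unfold shift.
  destruct (Fin.eq_dec k i); ring.
Qed.

Lemma has_pd_Dp n (f : Vec n -> R) i x :
  has_pd f i x -> derivable_pt_lim (fun t => f (shift x i t)) 0 (Dp f i x).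
Proof.
  intros H. unfold Dp. apply epsilon_spec. exact H.
Qed.

Lemma Dp_spec n (f : Vec n -> R) i x l :
  derivable_pt_lim (fun t => f (shift x i t)) 0 l -> Dp f i x = l.
Proof.
  intros H. eapply uniqueness_limite; [|exact H]. apply has_pd_Dp. exists l; exact H.
Qed.

Lemma dpl_shift_at n (g : Vec n -> R) z i s :
  has_pd g i (shift z i s) ->
  derivable_pt_lim (fun t => g (shift z i t)) s (Dp g i (shift z i s)).
Proof.
  intros H. pose proof (has_pd_Dp _ _ _ _ H) as D.
  intros eps heps. destruct (D eps heps) as [d hd]. exists d. intros h h0 hh.
  specialize (hd h h0 hh). rewrite !shift_shift, Rplus_0_l, Rplus_0_r in hd. exact hd.
Qed.

Lemma seg_mvt n (g : Vec n -> R) z i c :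
  (forall s, Rabs s <= Rabs c -> has_pd g i (shift z i s)) ->
  exists th, Rabs th <= Rabs c /\ g (shift z i c) - g z = Dp g i (shift z i th) * c.
Proof.
  intros H.
  destruct (Rtotal_order c 0) as [hc|[hc|hc]].
  - destruct (MVT_cor2 (fun t => g (shift z i t)) (fun t => Dp g i (shift z i t)) c 0 hc)
      as [th [E hth]].
    + intros s hs. apply dpl_shift_at. apply H.
      rewrite !Rabs_left1 by lra. lra.
    + exists th. split.
      * rewrite Rabs_left1 by lra. rewrite Rabs_left by lra. lra.
      * rewrite shift0 in E. lra.
  - subst c. exists 0. split; [lra|]. rewrite shift0. ring.
  - destruct (MVT_cor2 (fun t => g (shift z i t)) (fun t => Dp g i (shift z i t)) 0 c hc)
      as [th [E hth]].
    + intros s hs. apply dpl_shift_at. apply H.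
      rewrite !Rabs_right by lra. lra.
    + exists th. split.
      * rewrite !Rabs_right by lra. lra.
      * rewrite shift0 in E. lra.
Qed.

Definition mix {n} (k : nat) (p q : Vec n) : Vec n :=
  fun j => if Nat.ltb (tn j) k then q j else p j.

Lemma mix0 n (p q : Vec n) : mix 0 p q = p.
Proof. apply functional_extensionality; intros j. reflexivity. Qed.

Lemma tn_lt n (j : Fin.t n) : (tn j < n)%nat.
Proof. unfold LA.tn. destruct (Fin.to_nat j); simpl; auto. Qed.

Lemma mixn n (p q : Vec n) : mix n p q = q.
Proof.
  apply functional_extensionality; intros j. unfold mix.
  rewrite (proj2 (Nat.ltb_lt _ _) (tn_lt n j)). reflexivity.
Qed.

Lemma tn_inj n (a b : Fin.t n) : tn a = tn b -> a = b.
Proof. intros. apply Fin.to_nat_inj. exact H. Qed.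

Lemma mix_step n (p q : Vec n) i :
  mix (S (tn i)) p q = shift (mix (tn i) p q) i (q i - p i).
Proof.
  apply functional_extensionality; intros j. unfold mix, shift.
  destruct (Fin.eq_dec j i) as [e|ne].
  - subst j. rewrite (proj2 (Nat.ltb_lt _ _) (Nat.lt_succ_diag_r _)).
    rewrite (proj2 (Nat.ltb_ge _ _) (Nat.le_refl _)). ring.
  - assert (tn j <> tn i) by (intro e; apply ne, tn_inj, e).
    destruct (Nat.ltb (tn j) (tn i)) eqn:E1.
    + apply Nat.ltb_lt in E1. rewrite (proj2 (Nat.ltb_lt _ _)) by lia. reflexivity.
    + apply Nat.ltb_ge in E1. rewrite (proj2 (Nat.ltb_ge _ _)) by lia. reflexivity.
Qed.

Lemma mix_coord n (p q : Vec n) i s k :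
  Rabs s <= Rabs (q i - p i) ->
  Rabs (shift (mix (tn i) p q) i s k - p k) <= Rabs (q k - p k).
Proof.
  intros hs. unfold shift, mix. destruct (Fin.eq_dec k i) as [e|ne].
  - subst k. rewrite (proj2 (Nat.ltb_ge _ _) (Nat.le_refl _)).
    replace (p i + s - p i) with s by ring. exact hs.
  - destruct (Nat.ltb (tn k) (tn i)); [lra|].
    replace (p k - p k) with 0 by ring. rewrite Rabs_R0. apply Rabs_pos.
Qed.

Lemma term_mvt n (g : Vec n -> R) (p q : Vec n) i :
  (forall y, Defs.dist p y <= Defs.dist p q -> has_pd g i y) ->
  exists th,
    Defs.dist p (shift (mix (tn i) p q) i th) <= Defs.dist p q /\
    g (mix (S (tn i)) p q) - g (mix (tn i) p q) =
      Dp g i (shift (mix (tn i) p q) i th) * (q i - p i).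
Proof.
  intros H. rewrite mix_step.
  destruct (seg_mvt n g (mix (tn i) p q) i (q i - p i)) as [th [hth E]].
  - intros s hs. apply H. apply dist_mono. intros k. apply mix_coord. exact hs.
  - exists th. split; [|exact E]. apply dist_mono. intros k. apply mix_coord. exact hth.
Qed.

Lemma telescope n (g : Vec n -> R) (p q : Vec n) :
  g q - g p = fsum n (fun i => g (mix (S (tn i)) p q) - g (mix (tn i) p q)).
Proof.
  rewrite (fsum_tele n (fun k => g (mix k p q))). rewrite mixn, mix0. reflexivity.
Qed.

Lemma loc_const n (g : Vec n -> R) p r : r > 0 ->
  (forall y, Defs.dist p y < r -> forall i, has_pd g i y /\ Dp g i y = 0) ->
  forall q, Defs.dist p q < r -> g q = g p.
Proof.
  intros hr H q hq. apply Rminus_diag_uniq. rewrite telescope. apply fsum_zero. intros i.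
  destruct (term_mvt n g p q i) as [th [hd E]].
  - intros y hy. apply (H y). lra.
  - rewrite E. assert (hd2 : Defs.dist p (shift (mix (tn i) p q) i th) < r) by lra.
    rewrite (proj2 (H _ hd2 i)). ring.
Qed.

Lemma fin_min n (P : Fin.t n -> R -> Prop) :
  (forall i d d', 0 < d' <= d -> P i d -> P i d') ->
  (forall i, exists d, 0 < d /\ P i d) -> exists d, 0 < d /\ forall i, P i d.
Proof.
  induction n; intros Hm H.
  - exists 1. split; [lra|]. intros i. apply (Fin.case0 (fun i => P i 1) i).
  - destruct (H Fin.F1) as [d0 [hd0 H0]].
    destruct (IHn (fun i => P (Fin.FS i))) as [d1 [hd1 H1]].
    + intros i d d' hd. apply Hm. exact hd.
    + intros i. apply H.
    + exists (Rmin d0 d1). split; [apply Rmin_pos; auto|].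
      intros i. apply (Fin.caseS' i).
      * apply (Hm _ d0). split; [apply Rmin_pos; auto|apply Rmin_l]. exact H0.
      * intros j. apply (Hm _ d1). split; [apply Rmin_pos; auto|apply Rmin_r]. apply H1.
Qed.

Lemma arith a D Q c e : 0 < e ->
  Rabs (a - D) < e / (2 * (Rabs c + 1)) -> Rabs (Q - c) < 1 ->
  Rabs (Q - c) < e / (2 * (Rabs D + 1)) -> Rabs (a * Q - D * c) <= e.
Proof.
  intros he H1 H2 H3.
  replace (a * Q - D * c) with ((a - D) * Q + D * (Q - c)) by ring.
  eapply Rle_trans; [apply Rabs_triang|]. rewrite !Rabs_mult.
  assert (hQ : Rabs Q <= Rabs c + 1).
  { replace Q with ((Q - c) + c) by ring. pose proof (Rabs_triang (Q - c) c). lra. }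
  pose proof (Rabs_pos c). pose proof (Rabs_pos D). pose proof (Rabs_pos Q).
  pose proof (Rabs_pos (a - D)). pose proof (Rabs_pos (Q - c)).
  set (X := e / (2 * (Rabs c + 1))) in *.
  set (Y := e / (2 * (Rabs D + 1))) in *.
  assert (EX : X * (Rabs c + 1) = e / 2) by (unfold X; field; lra).
  assert (EY : Y * (Rabs D + 1) = e / 2) by (unfold Y; field; lra).
  assert (Rabs (a - D) * Rabs Q <= e / 2).
  { rewrite <- EX. apply Rmult_le_compat; lra. }
  assert (Rabs D * Rabs (Q - c) <= e / 2).
  { assert (Rabs D * Rabs (Q - c) <= Rabs D * Y) by (apply Rmult_le_compat_l; lra).
    assert (0 <= Y) by (unfold Y; apply Rlt_le, Rdiv_lt_0_compat; lra). nra. }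
  lra.
Qed.

Lemma chain n (g : Vec n -> R) (p : Vec n) (gam : R -> Vec n) (c : Vec n) r :
  0 < r -> (forall y, Defs.dist p y < r -> forall i, has_pd g i y) ->
  (forall i, cont_at (Dp g i) p) -> gam 0 = p ->
  (forall k, derivable_pt_lim (fun t => gam t k) 0 (c k)) ->
  derivable_pt_lim (fun t => g (gam t)) 0 (fsum n (fun i => Dp g i p * c i)).
Proof.
  intros hr Hpd Hc Hg0 Hd eps heps.
  assert (hn : 0 <= INR n) by apply pos_INR.
  set (e := eps / (INR n + 1)).
  assert (he : 0 < e) by (unfold e; apply Rdiv_lt_0_compat; lra).
  assert (hne : INR n * e < eps).
  { unfold e. apply (Rmult_lt_reg_r (INR n + 1)); [lra|].
    replace (INR n * (eps / (INR n + 1)) * (INR n + 1)) with (INR n * eps) by (field; lra).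
    nra. }
  destruct (fin_min n (fun i d => forall y, Defs.dist p y < d ->
       Rabs (Dp g i y - Dp g i p) < e / (2 * (Rabs (c i) + 1)))) as [dc [hdc Hdc]].
  { intros i d d' hd H y hy. apply H. lra. }
  { intros i. destruct (Hc i (e / (2 * (Rabs (c i) + 1)))) as [d [hd H]].
    - apply Rdiv_lt_0_compat; [lra|]. pose proof (Rabs_pos (c i)). lra.
    - exists d. split; [lra|]. intros y hy. apply H. exact hy. }
  set (rho := Rmin r dc).
  assert (hrho : 0 < rho) by (apply Rmin_pos; lra).
  destruct (fin_min n (fun k d => forall t, t <> 0 -> Rabs t < d ->
      Rabs ((gam t k - p k) / t - c k) < Rmin 1 (e / (2 * (Rabs (Dp g k p) + 1))) /\
      Rabs (gam t k - p k) < rho / (INR n + 1))) as [dl [hdl Hdl]].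
  { intros k d d' hd H t ht0 ht. apply H; auto. lra. }
  { intros k.
    assert (hm : 0 < Rmin 1 (e / (2 * (Rabs (Dp g k p) + 1)))).
    { apply Rmin_pos; [lra|]. apply Rdiv_lt_0_compat; [lra|].
      pose proof (Rabs_pos (Dp g k p)). lra. }
    destruct (Hd k _ hm) as [d hd].
    pose proof (Rabs_pos (c k)).
    assert (hb : 0 < rho / ((INR n + 1) * (Rabs (c k) + 1))).
    { apply Rdiv_lt_0_compat; [lra|]. nra. }
    exists (Rmin d (rho / ((INR n + 1) * (Rabs (c k) + 1)))).
    split; [apply Rmin_pos; [apply cond_pos|exact hb]|].
    intros t ht0 ht.
    assert (ht1 : Rabs t < d) by (eapply Rlt_le_trans; [exact ht|apply Rmin_l]).
    assert (ht2 : Rabs t < rho / ((INR n + 1) * (Rabs (c k) + 1)))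
      by (eapply Rlt_le_trans; [exact ht|apply Rmin_r]).
    specialize (hd t ht0 ht1). rewrite Rplus_0_l, Hg0 in hd.
    split; [exact hd|].
    set (Q := (gam t k - p k) / t) in *.
    assert (hQ : Rabs Q < Rabs (c k) + 1).
    { assert (Rabs (Q - c k) < 1) by (eapply Rlt_le_trans; [exact hd|apply Rmin_l]).
      replace Q with ((Q - c k) + c k) by ring. pose proof (Rabs_triang (Q - c k) (c k)). lra. }
    replace (gam t k - p k) with (t * Q) by (unfold Q; field; exact ht0).
    rewrite Rabs_mult.
    assert (E : rho / ((INR n + 1) * (Rabs (c k) + 1)) * (Rabs (c k) + 1) = rho / (INR n + 1))
      by (field; lra).
    rewrite <- E. pose proof (Rabs_pos t). pose proof (Rabs_pos Q).
    apply Rle_lt_trans with (Rabs t * (Rabs (c k) + 1)).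
    - apply Rmult_le_compat_l; lra.
    - apply Rmult_lt_compat_r; lra. }
  exists (mkposreal dl hdl). intros t ht0 ht. simpl in ht.
  rewrite Rplus_0_l, Hg0.
  set (q := gam t).
  assert (hq : Defs.dist p q < rho).
  { apply dist_small; [exact hrho|]. intros k. apply (Hdl k t ht0 ht). }
  assert (hrr : rho <= r) by apply Rmin_l.
  assert (hrd : rho <= dc) by apply Rmin_r.
  rewrite telescope.
  assert (Eq : fsum n (fun i => g (mix (S (tn i)) p q) - g (mix (tn i) p q)) / t
               - fsum n (fun i => Dp g i p * c i)
             = fsum n (fun i => (g (mix (S (tn i)) p q) - g (mix (tn i) p q)) / t
                                - Dp g i p * c i)).
  { set (T := fun i => g (mix (S (tn i)) p q) - g (mix (tn i) p q)).
    assert (ET : fsum n T / t = fsum n (fun i => T i / t)).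
    { unfold Rdiv. rewrite Rmult_comm, <- fsum_scal. apply fsum_ext; intros; ring. }
    rewrite ET. rewrite <- fsum_minus. reflexivity. }
  rewrite Eq. eapply Rle_lt_trans; [apply fsum_abs|].
  eapply Rle_lt_trans; [apply (fsum_const_le _ _ e)|exact hne].
  intros i.
  destruct (term_mvt n g p q i) as [th [hd E]].
  { intros y hy. apply Hpd. lra. }
  rewrite E.
  set (xi := shift (mix (tn i) p q) i th) in *.
  replace (Dp g i xi * (q i - p i) / t) with (Dp g i xi * ((q i - p i) / t))
    by (field; exact ht0).
  destruct (Hdl i t ht0 ht) as [H1 _].
  apply arith.
  - exact he.
  - apply Hdc. lra.
  - eapply Rlt_le_trans; [exact H1|apply Rmin_l].
  - eapply Rlt_le_trans; [exact H1|apply Rmin_r].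
Qed.

Lemma dpl_local (f g : R -> R) l :
  derivable_pt_lim f 0 l -> (exists r, 0 < r /\ forall t, Rabs t < r -> f t = g t) ->
  derivable_pt_lim g 0 l.
Proof.
  intros H [r [hr E]] eps heps. destruct (H eps heps) as [d hd].
  assert (hm : 0 < Rmin d r) by (apply Rmin_pos; [apply cond_pos|exact hr]).
  exists (mkposreal _ hm). intros h h0 hh. simpl in hh.
  assert (h1 : Rabs h < d) by (eapply Rlt_le_trans; [exact hh|apply Rmin_l]).
  assert (h2 : Rabs h < r) by (eapply Rlt_le_trans; [exact hh|apply Rmin_r]).
  rewrite <- (E (0 + h)), <- (E 0).
  - apply hd; auto.
  - rewrite Rabs_R0. exact hr.
  - rewrite Rplus_0_l. exact h2.
Qed.

Lemma dpl_fsum n (F : Fin.t n -> R -> R) (l : Fin.t n -> R) x :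
  (forall i, derivable_pt_lim (F i) x (l i)) ->
  derivable_pt_lim (fun t => fsum n (fun i => F i t)) x (fsum n l).
Proof.
  revert F l; induction n; intros F l H; simpl.
  - apply derivable_pt_lim_const.
  - apply (derivable_pt_lim_plus (F Fin.F1) (fun t => fsum n (fun i => F (Fin.FS i) t))).
    + apply H.
    + apply (IHn (fun i => F (Fin.FS i)) (fun i => l (Fin.FS i))). intros; apply H.
Qed.

Lemma dpl_sq (F : R -> R) x l :
  derivable_pt_lim F x l -> derivable_pt_lim (fun t => F t ^ 2) x (2 * F x * l).
Proof.
  intros H.
  replace (fun t => F t ^ 2) with (mult_fct F F).
  - replace (2 * F x * l) with (l * F x + F x * l) by ring.
    apply derivable_pt_lim_mult; exact H.
  - apply functional_extensionality; intros t. unfold mult_fct. ring.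
Qed.

Lemma dpl_shift_coord n (x : Vec n) i k :
  derivable_pt_lim (fun t => shift x i t k) 0 (if Fin.eq_dec k i then 1 else 0).
Proof.
  unfold shift. destruct (Fin.eq_dec k i).
  - replace (fun t => x k + t) with (plus_fct (fct_cte (x k)) id).
    + replace 1 with (0 + 1) by ring. apply derivable_pt_lim_plus.
      * apply derivable_pt_lim_const.
      * apply derivable_pt_lim_id.
    + apply functional_extensionality; intros t. reflexivity.
  - apply derivable_pt_lim_const.
Qed.

Lemma frob2_nonneg n (A : Mat n) : 0 <= frob2 A.
Proof.
  unfold frob2. apply fsum_nonneg; intros a. apply fsum_nonneg; intros i. apply pow2_ge_0.
Qed.

Definition Gv {n} (u : Vec n -> Vec n) (x : Vec n) (i : Fin.t n) : R :=
  fsum n (fun b => fsum n (fun j => Du u x b j * D2u u x b i j)).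

Lemma frob_pd n (O : Vec n -> Prop) (u : Vec n -> Vec n) y i :
  C2_on O u -> O y ->
  derivable_pt_lim (fun t => frob2 (Du u (shift y i t))) 0 (2 * Gv u y i).
Proof.
  intros HC hy. unfold Gv, frob2, Du.
  rewrite <- fsum_scal.
  apply dpl_fsum. intros b.
  rewrite <- fsum_scal.
  apply dpl_fsum. intros j.
  rewrite <- Rmult_assoc.
  assert (Hd : derivable_pt_lim (fun t => Dp (fun y0 => u y0 b) j (shift y i t)) 0 (D2u u y b i j)).
  { unfold D2u. apply has_pd_Dp.
    destruct (HC b y hy) as [_ H]. destruct (H j) as [_ [_ H2]]. apply (H2 i). }
  pose proof (dpl_sq _ 0 _ Hd) as E. cbv beta in E. rewrite shift0 in E. exact E.
Qed.

Lemma inf_lap_eq n (u : Vec n -> Vec n) x al :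
  inf_lap u x al = fsum n (fun i => Du u x al i * Gv u x i)
    + frob2 (Du u x) * fsum n (fun b => fsum n (fun i => proj_ker (Du u x) al b * D2u u x b i i)).
Proof.
  unfold inf_lap. f_equal. apply fsum_ext; intros i. unfold Gv.
  rewrite <- fsum_scal. rewrite fsum_swap. apply fsum_ext; intros j.
  rewrite <- fsum_scal. apply fsum_ext; intros b. ring.
Qed.

Lemma proj_zero n (A : Mat n) :
  (forall z : Vec n, (forall i, fsum n (fun a => A a i * z a) = 0) -> forall b, z b = 0) ->
  forall a b, proj_ker A a b = 0.
Proof.
  intros K.
  assert (HP : is_proj_ker A (proj_ker A)).
  { unfold proj_ker. apply epsilon_spec. exists (fun _ _ => 0).
    intros v. simpl. split.
    - intros i. apply fsum_zero; intros a. rewrite fsum_zero; [ring|]. intros; ring.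
    - intros z hz. apply fsum_zero; intros a. rewrite (K z hz a). ring. }
  intros a b.
  destruct (HP (fun c => if Fin.eq_dec c b then 1 else 0)) as [H1 _].
  pose proof (K _ H1 a) as E. simpl in E.
  rewrite (fsum_single _ _ b) in E.
  - destruct (Fin.eq_dec b b); [|congruence]. rewrite <- E. ring.
  - intros c hc. destruct (Fin.eq_dec c b); [congruence|]. ring.
Qed.

Lemma dir1 n (Om : Vec n -> Prop) (u : Vec n -> Vec n) :
  is_open Om -> C2_on Om u ->
  (exists a, 0 <= a /\ forall x, Om x -> in_La a (Du u x)) ->
  forall x, Om x -> forall al, inf_lap u x al = 0.
Proof.
  intros Ho HC [a0 [ha0 HL]] x hx al.
  assert (Hf : forall y, Om y -> frob2 (Du u y) = a0).
  { intros y hy. destruct (HL y hy) as [E _]. apply sqrt_inj; auto. apply frob2_nonneg. }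
  assert (HG : forall i, Gv u x i = 0).
  { intros i. destruct (Ho x hx) as [r [hr Hr]].
    assert (D0 : derivable_pt_lim (fun t => frob2 (Du u (shift x i t))) 0 0).
    { apply (dpl_local (fun _ => a0)). apply derivable_pt_lim_const.
      exists r. split; auto. intros t ht. symmetry. apply Hf. apply Hr.
      rewrite dist_shift. exact ht. }
    pose proof (uniqueness_limite _ _ _ _ (frob_pd n Om u x i HC hx) D0). lra. }
  assert (HP : forall a b, proj_ker (Du u x) a b = 0).
  { apply proj_zero. apply LA.det_ker. apply (proj2 (HL x hx)). }
  rewrite inf_lap_eq. rewrite (fsum_zero n (fun i => Du u x al i * Gv u x i)).
  - rewrite fsum_zero; [ring|]. intros b. apply fsum_zero. intros i. rewrite HP. ring.
  - intros i. rewrite HG. ring.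
Qed.

Lemma inv_at n (Om : Vec n -> Prop) (u : Vec n -> Vec n) :
  is_open Om -> C2_on Om u -> local_diffeo_on Om u -> forall x, Om x ->
  exists B : Mat n,
    (forall a b, fsum n (fun k => Du u x a k * B k b) = if Fin.eq_dec a b then 1 else 0) /\
    (forall a b, fsum n (fun k => B a k * Du u x k b) = if Fin.eq_dec a b then 1 else 0).
Proof.
  intros Ho HC HL x hx.
  destruct (HL x hx) as [U [V [v [HUo [HUx [HUO [HVo [HUV [HVU HvC]]]]]]]]].
  exists (Du v (u x)).
  pose proof (proj1 (HUV x HUx)) as HVux.
  assert (Hvx : v (u x) = x) by (apply functional_extensionality; apply (proj2 (HUV x HUx))).
  destruct (HVo (u x) HVux) as [rV [hrV HrV]].
  destruct (HUo x HUx) as [rU [hrU HrU]].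
  destruct (Ho x hx) as [rO [hrO HrO]].
  split.
  - intros a b.
    assert (Hch : derivable_pt_lim (fun t => u (v (shift (u x) b t)) a) 0
                    (fsum n (fun k => Dp (fun y => u y a) k x * Du v (u x) k b))).
    { apply (chain n (fun y => u y a) x (fun t => v (shift (u x) b t)) (fun k => Du v (u x) k b) rO).
      - exact hrO.
      - intros y hy i. destruct (HC a y (HrO y hy)) as [_ H]. apply (H i).
      - intros i. destruct (HC a x hx) as [_ H]. apply (H i).
      - rewrite shift0. exact Hvx.
      - intros k. unfold Du. destruct (HvC k (u x) HVux) as [_ H]. destruct (H b) as [Hb _].
        exact (has_pd_Dp _ _ _ _ Hb). }
    eapply uniqueness_limite; [exact Hch|].
    apply (dpl_local (fun t => shift (u x) b t a)); [apply dpl_shift_coord|].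
    exists rV. split; auto. intros t ht. symmetry.
    apply (proj2 (HVU _ (HrV _ ltac:(rewrite dist_shift; exact ht)))).
  - intros a b.
    assert (Hch : derivable_pt_lim (fun t => v (u (shift x b t)) a) 0
                    (fsum n (fun k => Dp (fun w => v w a) k (u x) * Du u x k b))).
    { apply (chain n (fun w => v w a) (u x) (fun t => u (shift x b t)) (fun k => Du u x k b) rV).
      - exact hrV.
      - intros y hy i. destruct (HvC a y (HrV y hy)) as [_ H]. apply (H i).
      - intros i. destruct (HvC a (u x) HVux) as [_ H]. apply (H i).
      - rewrite shift0. reflexivity.
      - intros k. unfold Du. destruct (HC k x hx) as [_ H]. destruct (H b) as [Hb _].
        exact (has_pd_Dp _ _ _ _ Hb). }
    eapply uniqueness_limite; [exact Hch|].
    apply (dpl_local (fun t => shift x b t a)); [apply dpl_shift_coord|].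
    exists rU. split; auto. intros t ht. symmetry.
    apply (proj2 (HUV _ (HrU _ ltac:(rewrite dist_shift; exact ht)))).
Qed.

Lemma dir2 n (Om : Vec n -> Prop) (u : Vec n -> Vec n) :
  is_open Om -> is_connected Om -> C2_on Om u -> local_diffeo_on Om u ->
  (forall x, Om x -> forall al, inf_lap u x al = 0) ->
  exists a, 0 <= a /\ forall x, Om x -> in_La a (Du u x).
Proof.
  intros Ho Hc HC HL Hinf.
  assert (Hdet : forall x, Om x -> det (Du u x) <> 0).
  { intros x hx. destruct (inv_at n Om u Ho HC HL x hx) as [B [HAB _]].
    apply (LA.det_inv _ _ B). exact HAB. }
  assert (HG : forall x, Om x -> forall i, Gv u x i = 0).
  { intros x hx i. destruct (inv_at n Om u Ho HC HL x hx) as [B [_ HBA]].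
    pose proof (proj_zero _ _ (LA.det_ker _ _ (Hdet x hx))) as HP.
    assert (HA : forall al, fsum n (fun k => Du u x al k * Gv u x k) = 0).
    { intros al. specialize (Hinf x hx al). rewrite inf_lap_eq in Hinf.
      rewrite (fsum_zero n (fun b => fsum n (fun i => proj_ker (Du u x) al b * D2u u x b i i)))
        in Hinf.
      - lra.
      - intros b. apply fsum_zero. intros j. rewrite HP. ring. }
    transitivity (fsum n (fun a => B i a * fsum n (fun k => Du u x a k * Gv u x k))).
    - rewrite (fsum_ext _ _ (fun a => fsum n (fun k => B i a * Du u x a k * Gv u x k))).
      + rewrite fsum_swap.
        rewrite (fsum_ext _ _ (fun k => fsum n (fun a => B i a * Du u x a k) * Gv u x k)).
        * rewrite (fsum_single _ _ i).
          -- rewrite HBA. destruct (Fin.eq_dec i i); [ring|congruence].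
          -- intros k hk. rewrite HBA. destruct (Fin.eq_dec i k); [congruence|ring].
        * intros k. rewrite Rmult_comm, <- fsum_scal. apply fsum_ext; intros; ring.
      + intros a. rewrite <- fsum_scal. apply fsum_ext; intros; ring.
    - apply fsum_zero; intros a. rewrite HA. ring. }
  set (f := fun y => frob2 (Du u y)).
  assert (Hpd : forall y, Om y -> forall i, has_pd f i y /\ Dp f i y = 0).
  { intros y hy i. pose proof (frob_pd n Om u y i HC hy) as D.
    rewrite (HG y hy i), Rmult_0_r in D. split.
    - exists 0. exact D.
    - apply Dp_spec. exact D. }
  assert (Hloc : forall y, Om y -> exists r, r > 0 /\
                  forall z, Defs.dist y z < r -> Om z /\ f z = f y).
  { intros y hy. destruct (Ho y hy) as [r [hr Hr]]. exists r. split; auto.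
    intros z hz. split; [apply Hr; exact hz|].
    apply (loc_const n f y r hr); [intros y' hy'; apply Hpd; apply Hr; exact hy'|exact hz]. }
  destruct (classic (exists x0, Om x0)) as [[x0 hx0] | Hne].
  2:{ exists 0. split; [lra|]. intros x hx. exfalso. apply Hne. exists x. exact hx. }
  exists (f x0). split; [apply frob2_nonneg|].
  assert (Hall : forall y, Om y -> f y = f x0).
  { intros y hy. apply NNPP. intros hne.
    destruct (Hc (fun z => Om z /\ f z = f x0) (fun z => Om z /\ f z <> f x0))
      as [w [hw [[_ e1] [_ e2]]]].
    - intros z [hz e]. destruct (Hloc z hz) as [r [hr H]]. exists r. split; auto.
      intros y' hy'. destruct (H y' hy'). split; auto. congruence.
    - intros z [hz e]. destruct (Hloc z hz) as [r [hr H]]. exists r. split; auto.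
      intros y' hy'. destruct (H y' hy'). split; auto. congruence.
    - intros z hz. destruct (classic (f z = f x0)); [left|right]; auto.
    - exists x0. auto.
    - exists y. auto.
    - congruence. }
  intros x hx. split.
  - f_equal. apply Hall. exact hx.
  - apply Hdet. exact hx.
Qed.

Theorem lemma2p1 (n : nat) (Omega : Vec n -> Prop) (u : Vec n -> Vec n) :
  is_open Omega -> is_connected Omega -> C2_on Omega u ->
  ((exists a, 0 <= a /\ forall x, Omega x -> in_La a (Du u x)) ->
     forall x, Omega x -> forall al, inf_lap u x al = 0) /\
  (local_diffeo_on Omega u ->
     (forall x, Omega x -> forall al, inf_lap u x al = 0) ->
     exists a, 0 <= a /\ forall x, Omega x -> in_La a (Du u x)).
Proof.
  intros Ho Hc HC. split.
  - apply dir1; auto.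
  - intros HL Hinf. apply dir2; auto.
Qed.
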